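(* Let $A$ be an enumerable set of binary strings. There exists an oracle machine $\Psi$ such that for every $1$-generic sequence $G\in\mathbb{N}^{\mathbb{N}}$, the machine $\Psi$ with oracle $G$ computes a total function $\alpha$ with $\underline{E}(\alpha,A)=0$.
   Context: A sequence $G\in\mathbb{N}^{\mathbb{N}}$ is $1$-generic if for every enumerable set $W$ of finite sequences of natural numbers, either $G$ has a prefix in $W$ or $G$ has a prefix none of whose extensions lies in $W$. For a total function $\alpha$ on binary strings, let $\varepsilon_n$ be the fraction of binary strings of length at most $n$ on which $\alpha$ differs from the characteristic function of $A$, and $\underline{E}(\alpha,A)=\liminf_n\varepsilon_n$. *)

(* Defs.v *)
From Stdlib Require Import Arith List Reals Cantor.
From Coquelicot Require Import Coquelicot.
Import ListNotations.
Local Open Scope nat_scope.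

(* A model of oracle computation: unary mu-recursive functions on nat  *)
(* (arguments paired with the Cantor pairing), with an oracle call.     *)

Definition pair (a b : nat) : nat := Cantor.to_nat (a, b).
Definition fst_n (n : nat) : nat := fst (Cantor.of_nat n).
Definition snd_n (n : nat) : nat := snd (Cantor.of_nat n).

Inductive code : Type :=
| CZero
| CSucc
| CId
| CFst
| CSnd
| COracle
| CPair (f g : code)
| CComp (f g : code)
| CPrec (f g : code)         (* h <a,0> = f a ; h <a,n+1> = g <a,<n,h <a,n>>> *)
| CMu (f : code).            (* x |-> least n with f <x,n> = 0 (all earlier defined) *)

Inductive eval (G : nat -> nat) : code -> nat -> nat -> Prop :=
| ev_zero x : eval G CZero x 0
| ev_succ x : eval G CSucc x (S x)
| ev_id x : eval G CId x x
| ev_fst x : eval G CFst x (fst_n x)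
| ev_snd x : eval G CSnd x (snd_n x)
| ev_oracle x : eval G COracle x (G x)
| ev_pair f g x y z : eval G f x y -> eval G g x z -> eval G (CPair f g) x (pair y z)
| ev_comp f g x y z : eval G g x y -> eval G f y z -> eval G (CComp f g) x z
| ev_prec0 f g a y : eval G f a y -> eval G (CPrec f g) (pair a 0) y
| ev_precS f g a n z y : eval G (CPrec f g) (pair a n) z ->
    eval G g (pair a (pair n z)) y -> eval G (CPrec f g) (pair a (S n)) y
| ev_mu f x n : eval G f (pair x n) 0 ->
    (forall m : nat, (m < n)%nat -> exists y, eval G f (pair x m) (S y)) ->
    eval G (CMu f) x n.

(* Computation without oracle (the oracle is the constant 0 function,
   which is computable, so this is plain partial computability). *)
Definition eval0 (c : code) (x y : nat) : Prop := eval (fun _ => 0) c x y.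

(* Bijective base-2 numbering of binary strings. *)
Fixpoint enc_bits (s : list bool) : nat :=
  match s with
  | [] => 0
  | b :: s' => 2 * enc_bits s' + (if b then 2 else 1)
  end.

Fixpoint enc_nats (s : list nat) : nat :=
  match s with
  | [] => 0
  | x :: s' => S (pair x (enc_nats s'))
  end.

Definition enumerable_bits (A : list bool -> bool) : Prop :=
  exists e : code, forall s, A s = true <-> exists y, eval0 e (enc_bits s) y.

Definition enumerable_nats (W : list nat -> Prop) : Prop :=
  exists e : code, forall s, W s <-> exists y, eval0 e (enc_nats s) y.

Definition prefix (G : nat -> nat) (n : nat) : list nat := map G (seq 0 n).

Definition one_generic (G : nat -> nat) : Prop :=
  forall W : list nat -> Prop, enumerable_nats W ->
    (exists n, W (prefix G n)) \/
    (exists n, forall t : list nat, ~ W (prefix G n ++ t)).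

Fixpoint strings_of_len (k : nat) : list (list bool) :=
  match k with
  | 0 => [[]]
  | S k' => flat_map (fun s => [false :: s; true :: s]) (strings_of_len k')
  end.

Definition strings_upto (n : nat) : list (list bool) :=
  flat_map strings_of_len (seq 0 (S n)).

Definition err_frac (alpha A : list bool -> bool) (n : nat) : R :=
  (INR (length (filter (fun s => negb (Bool.eqb (alpha s) (A s))) (strings_upto n)))
  / INR (length (strings_upto n)))%R.

Definition lower_err (alpha A : list bool -> bool) : Rbar :=
  LimInf_seq (err_frac alpha A).

(* Main.v *)
Require Import Defs.
From Stdlib Require Import Arith List Lia Cantor Bool Classical ClassicalEpsilon Reals Lra.
From Coquelicot Require Import Coquelicot.
Import ListNotations.
Local Open Scope bool_scope.
Local Open Scope nat_scope.

Lemma pair_inj a b c d : pair a b = pair c d -> a = c /\ b = d.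
Proof. unfold pair. intro H. apply (f_equal Cantor.of_nat) in H.
  rewrite !Cantor.cancel_of_to in H. now inversion H. Qed.
Lemma fst_pair a b : fst_n (pair a b) = a.
Proof. unfold fst_n, pair. now rewrite Cantor.cancel_of_to. Qed.
Lemma snd_pair a b : snd_n (pair a b) = b.
Proof. unfold snd_n, pair. now rewrite Cantor.cancel_of_to. Qed.
Lemma pair_surj x : pair (fst_n x) (snd_n x) = x.
Proof. unfold fst_n, snd_n, pair. rewrite <- surjective_pairing. apply Cantor.cancel_to_of. Qed.
Lemma fst_0 : fst_n 0 = 0. Proof. reflexivity. Qed.
Lemma snd_0 : snd_n 0 = 0. Proof. reflexivity. Qed.

Lemma comp_inv G f g x z : eval G (CComp f g) x z -> exists y, eval G g x y /\ eval G f y z.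
Proof. intro H; inversion H; subst; eauto. Qed.
Lemma pair_inv G f g x w : eval G (CPair f g) x w -> exists y z, eval G f x y /\ eval G g x z /\ w = pair y z.
Proof. intro H; inversion H; subst; eauto. Qed.
Lemma prec_inv G f g x y : eval G (CPrec f g) x y ->
  (exists a, x = pair a 0 /\ eval G f a y) \/
  (exists a n z, x = pair a (S n) /\ eval G (CPrec f g) (pair a n) z /\ eval G g (pair a (pair n z)) y).
Proof. intro H; inversion H; subst; eauto 10. Qed.
Lemma mu_inv G f x n : eval G (CMu f) x n -> eval G f (pair x n) 0 /\
    (forall m : nat, (m < n)%nat -> exists y, eval G f (pair x m) (S y)).
Proof. intro H; inversion H; subst; eauto. Qed.

Definition spec (c : code) (f : nat -> nat) : Prop :=
  forall G x y, eval G c x y <-> y = f x.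

Lemma spec_ext c f g : spec c f -> (forall x, f x = g x) -> spec c g.
Proof. intros H E G x y. rewrite (H G x y), E. tauto. Qed.

Lemma spec_zero : spec CZero (fun _ => 0).
Proof. intros G x y; split; intro H; [inversion H; auto | subst; constructor]. Qed.
Lemma spec_succ : spec CSucc S.
Proof. intros G x y; split; intro H; [inversion H; auto | subst; constructor]. Qed.
Lemma spec_id : spec CId (fun x => x).
Proof. intros G x y; split; intro H; [inversion H; auto | subst; constructor]. Qed.
Lemma spec_fst : spec CFst fst_n.
Proof. intros G x y; split; intro H; [inversion H; auto | subst; constructor]. Qed.
Lemma spec_snd : spec CSnd snd_n.
Proof. intros G x y; split; intro H; [inversion H; auto | subst; constructor]. Qed.

Lemma spec_comp f g F Gf : spec f F -> spec g Gf -> spec (CComp f g) (fun x => F (Gf x)).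
Proof. intros hf hg G x z; split; intro H.
  - destruct (comp_inv _ _ _ _ _ H) as [y [H1 H2]]. apply hg in H1; apply hf in H2. congruence.
  - subst. econstructor; [apply hg; reflexivity | apply hf; reflexivity]. Qed.
Lemma spec_pair f g F Gf : spec f F -> spec g Gf -> spec (CPair f g) (fun x => pair (F x) (Gf x)).
Proof. intros hf hg G x z; split; intro H.
  - destruct (pair_inv _ _ _ _ _ H) as [y [w [H1 [H2 ->]]]]. apply hf in H1; apply hg in H2. congruence.
  - subst. econstructor; [apply hf; reflexivity | apply hg; reflexivity]. Qed.

Fixpoint primrec (F Gf : nat -> nat) (a n : nat) : nat :=
  match n with 0 => F a | S m => Gf (pair a (pair m (primrec F Gf a m))) end.

Lemma spec_prec_aux f g F Gf : spec f F -> spec g Gf ->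
  forall G a n y, eval G (CPrec f g) (pair a n) y <-> y = primrec F Gf a n.
Proof. intros hf hg G a n. induction n as [|n IH]; intro y; split; intro H.
  - destruct (prec_inv _ _ _ _ _ H) as [[a' [E H1]]|[a' [n' [z [E _]]]]];
      apply pair_inj in E; destruct E; subst; [apply hf in H1; auto | discriminate].
  - subst. constructor. apply hf; reflexivity.
  - destruct (prec_inv _ _ _ _ _ H) as [[a' [E H1]]|[a' [n' [z [E [H1 H2]]]]]];
      apply pair_inj in E; destruct E as [E1 E2]; [discriminate|].
    injection E2 as <-. subst a'. apply IH in H1. apply hg in H2. subst. reflexivity.
  - subst. econstructor. apply IH; reflexivity. apply hg; reflexivity. Qed.

Lemma spec_prec f g F Gf : spec f F -> spec g Gf ->
  spec (CPrec f g) (fun x => primrec F Gf (fst_n x) (snd_n x)).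
Proof. intros hf hg G x y. rewrite <- (pair_surj x) at 1. now apply spec_prec_aux. Qed.

Lemma spec_mu f F : spec f F -> forall G x n,
  eval G (CMu f) x n <-> F (pair x n) = 0 /\ (forall m, m < n -> F (pair x m) <> 0).
Proof. intros hf G x n; split; intro H.
  - destruct (mu_inv _ _ _ _ H) as [H1 H2]. apply hf in H1. split; auto.
    intros m Hm. destruct (H2 m Hm) as [y Hy]. apply hf in Hy. congruence.
  - destruct H as [H1 H2]. constructor. apply hf; auto.
    intros m Hm. specialize (H2 m Hm). destruct (F (pair x m)) eqn:E; [congruence|].
    exists n0. apply hf. auto. Qed.

Fixpoint cst (k : nat) : code := match k with 0 => CZero | S k => CComp CSucc (cst k) end.
Lemma spec_cst k : spec (cst k) (fun _ => k).
Proof. induction k; simpl. apply spec_zero. exact (spec_comp _ _ _ _ spec_succ IHk). Qed.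

Definition pred_c := CComp (CPrec CZero (CComp CFst CSnd)) (CPair CZero CId).
Lemma spec_pred : spec pred_c Nat.pred.
Proof. eapply spec_ext. apply spec_comp. apply spec_prec. apply spec_zero.
  apply spec_comp. apply spec_fst. apply spec_snd. apply spec_pair. apply spec_zero. apply spec_id.
  intro x. cbv beta. cbn [primrec]. rewrite ?fst_pair, ?snd_pair. destruct x; cbn [primrec]; auto.
  rewrite ?snd_pair, ?fst_pair. auto. Qed.

Definition add_c := CPrec CId (CComp CSucc (CComp CSnd CSnd)).
Lemma spec_add : spec add_c (fun x => fst_n x + snd_n x).
Proof. eapply spec_ext. apply spec_prec. apply spec_id.
  apply spec_comp. apply spec_succ. apply spec_comp; [apply spec_snd|apply spec_snd].
  intro x. cbv beta. generalize (snd_n x). intro n. induction n; cbn [primrec]; try lia.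
  rewrite !snd_pair, IHn. lia. Qed.

Definition mul_c := CPrec CZero (CComp add_c (CPair (CComp CSnd CSnd) CFst)).
Lemma spec_mul : spec mul_c (fun x => fst_n x * snd_n x).
Proof. eapply spec_ext. apply spec_prec. apply spec_zero.
  apply spec_comp. apply spec_add. apply spec_pair. apply spec_comp; [apply spec_snd|apply spec_snd].
  apply spec_fst.
  intro x. cbv beta. generalize (snd_n x). intro n. induction n; cbn [primrec]; try lia.
  rewrite ?fst_pair, ?snd_pair, IHn. lia. Qed.

Definition sub_c := CPrec CId (CComp pred_c (CComp CSnd CSnd)).
Lemma spec_sub : spec sub_c (fun x => fst_n x - snd_n x).
Proof. eapply spec_ext. apply spec_prec. apply spec_id.
  apply spec_comp. apply spec_pred. apply spec_comp; [apply spec_snd|apply spec_snd].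
  intro x. cbv beta. generalize (snd_n x). intro n. induction n; cbn [primrec]; try lia.
  rewrite !snd_pair, IHn. lia. Qed.

Definition bin (op f g : code) := CComp op (CPair f g).
Lemma spec_bin_add f g F Gf : spec f F -> spec g Gf -> spec (bin add_c f g) (fun x => F x + Gf x).
Proof. intros. eapply spec_ext. apply spec_comp. apply spec_add. apply spec_pair; eauto.
  intro; cbn beta; now rewrite fst_pair, snd_pair. Qed.
Lemma spec_bin_mul f g F Gf : spec f F -> spec g Gf -> spec (bin mul_c f g) (fun x => F x * Gf x).
Proof. intros. eapply spec_ext. apply spec_comp. apply spec_mul. apply spec_pair; eauto.
  intro; cbn beta; now rewrite fst_pair, snd_pair. Qed.
Lemma spec_bin_sub f g F Gf : spec f F -> spec g Gf -> spec (bin sub_c f g) (fun x => F x - Gf x).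
Proof. intros. eapply spec_ext. apply spec_comp. apply spec_sub. apply spec_pair; eauto.
  intro; cbn beta; now rewrite fst_pair, snd_pair. Qed.

Definition sgf (x : nat) := if x =? 0 then 0 else 1.
Definition nsgf (x : nat) := if x =? 0 then 1 else 0.
Definition sg_c := CComp (CPrec CZero (CComp CSucc CZero)) (CPair CZero CId).
Lemma spec_sg : spec sg_c sgf.
Proof. eapply spec_ext. apply spec_comp. apply spec_prec. apply spec_zero.
  apply spec_comp. apply spec_succ. apply spec_zero. apply spec_pair. apply spec_zero. apply spec_id.
  intro x. cbv beta. cbn [primrec]. rewrite snd_pair. destruct x; cbn [primrec]; reflexivity. Qed.
Definition nsg_c := CComp (CPrec (cst 1) CZero) (CPair CZero CId).
Lemma spec_nsg : spec nsg_c nsgf.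
Proof. eapply spec_ext. apply spec_comp. apply spec_prec. apply spec_cst.
  apply spec_zero. apply spec_pair. apply spec_zero. apply spec_id.
  intro x. cbv beta. cbn [primrec]. rewrite snd_pair. destruct x; cbn [primrec]; reflexivity. Qed.


Definition tailf v := snd_n (pred v).
Definition nthv v i := fst_n (pred (Nat.iter i tailf v)).

Definition tail_c := CComp CSnd pred_c.
Lemma spec_tail : spec tail_c tailf.
Proof. exact (spec_comp _ _ _ _ spec_snd spec_pred). Qed.
Definition tailIter_c := CPrec CId (CComp tail_c (CComp CSnd CSnd)).
Lemma spec_tailIter : spec tailIter_c (fun x => Nat.iter (snd_n x) tailf (fst_n x)).
Proof. eapply spec_ext. apply spec_prec. apply spec_id.
  apply spec_comp. apply spec_tail. apply spec_comp; [apply spec_snd|apply spec_snd].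
  intro x. cbv beta. generalize (snd_n x). intro n. induction n; cbn [primrec]; try reflexivity.
  rewrite !snd_pair, IHn. reflexivity. Qed.
Definition nth_c := CComp CFst (CComp pred_c tailIter_c).
Lemma spec_nth : spec nth_c (fun x => nthv (fst_n x) (snd_n x)).
Proof. eapply spec_ext. apply spec_comp. apply spec_fst. apply spec_comp. apply spec_pred.
  apply spec_tailIter. intro; reflexivity. Qed.
Definition len_c := CMu tailIter_c.

Lemma tail_skipn (s : list nat) i : tailf (enc_nats (skipn i s)) = enc_nats (skipn (S i) s).
Proof. revert i; induction s as [|x s IH]; intro i.
  - destruct i; reflexivity.
  - destruct i. simpl. unfold tailf. simpl. now rewrite snd_pair.
    simpl skipn. apply IH. Qed.
Lemma iter_tail s i : Nat.iter i tailf (enc_nats s) = enc_nats (skipn i s).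
Proof. induction i. reflexivity. simpl Nat.iter. rewrite IHi. apply tail_skipn. Qed.
Lemma head_skipn (s : list nat) i : fst_n (pred (enc_nats (skipn i s))) = nth i s 0.
Proof. revert i; induction s as [|x s IH]; intro i.
  - destruct i; reflexivity.
  - destruct i. simpl. now rewrite fst_pair. simpl. apply IH. Qed.
Lemma nthv_enc s i : nthv (enc_nats s) i = nth i s 0.
Proof. unfold nthv. rewrite iter_tail. apply head_skipn. Qed.
Lemma enc_skipn_0 (s : list nat) n : enc_nats (skipn n s) = 0 <-> length s <= n.
Proof. assert (H: length (skipn n s) = length s - n) by apply length_skipn.
  destruct (skipn n s) as [|x l]; simpl in *; split; intro; try lia; discriminate. Qed.
Lemma len_spec G s y : eval G len_c (enc_nats s) y <-> y = length s.
Proof. unfold len_c. rewrite (spec_mu _ _ spec_tailIter). rewrite fst_pair, snd_pair, iter_tail, enc_skipn_0.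
  split.
  - intros [H1 H2]. destruct (Nat.lt_ge_cases (length s) y) as [h|h]; [|lia].
    specialize (H2 _ h). rewrite fst_pair, snd_pair, iter_tail, enc_skipn_0 in H2. lia.
  - intros ->. split; [lia|]. intros m Hm. rewrite fst_pair, snd_pair, iter_tail, enc_skipn_0. lia. Qed.

Definition Vc := CComp CFst CFst.
Definition Nc := CComp CSnd CFst.
Definition b_c (K : nat) := bin mul_c (CComp nsg_c (bin sub_c Nc (bin mul_c (cst K) CSnd)))
  (CComp sg_c (CComp nth_c (CPair Vc CSnd))).
Definition Bf (K : nat) (y : nat) : nat :=
  nsgf (snd_n (fst_n y) - K * snd_n y) * sgf (nthv (fst_n (fst_n y)) (snd_n y)).
Lemma spec_b K : spec (b_c K) (Bf K).
Proof. eapply spec_ext. apply spec_bin_mul. apply spec_comp. apply spec_nsg.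
  apply spec_bin_sub. apply spec_comp. apply spec_snd. apply spec_fst.
  apply spec_bin_mul. apply spec_cst. apply spec_snd.
  apply spec_comp. apply spec_sg. apply spec_comp. apply spec_nth. apply spec_pair.
  apply spec_comp. apply spec_fst. apply spec_fst. apply spec_snd.
  intro x. unfold Bf. rewrite fst_pair, snd_pair. reflexivity. Qed.

Fixpoint sumB (B : nat -> nat) (a n : nat) : nat :=
  match n with 0 => 0 | S m => sumB B a m + B (pair a m) end.
Definition sum_c (bc : code) := CComp (CPrec CZero (bin add_c (CComp CSnd CSnd)
   (CComp bc (CPair CFst (CComp CFst CSnd))))) (CPair CId CSnd).
Lemma spec_sum bc B : spec bc B -> spec (sum_c bc) (fun a => sumB B a (snd_n a)).
Proof. intro hb. eapply spec_ext. apply spec_comp. apply spec_prec. apply spec_zero.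
  apply spec_bin_add. apply spec_comp; apply spec_snd. apply spec_comp. exact hb.
  apply spec_pair. apply spec_fst. apply spec_comp. apply spec_fst. apply spec_snd.
  apply spec_pair. apply spec_id. apply spec_snd.
  intro a. cbv beta. rewrite fst_pair, snd_pair. generalize (snd_n a). intro n.
  induction n; cbn [primrec sumB]; auto. rewrite !fst_pair, !snd_pair, IHn, fst_pair. reflexivity. Qed.

Definition D_c (K M j : nat) := bin add_c (bin sub_c (cst M) CSnd)
  (bin sub_c (bin mul_c (cst j) CSnd) (bin add_c (bin mul_c (cst K) (sum_c (b_c K))) (bin mul_c (cst 2) CSnd))).
Definition Df (K M j a : nat) := (M - snd_n a) + (j * snd_n a - (K * sumB (Bf K) a (snd_n a) + 2 * snd_n a)).
Lemma spec_D K M j : spec (D_c K M j) (Df K M j).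
Proof. eapply spec_ext. apply spec_bin_add. apply spec_bin_sub. apply spec_cst. apply spec_snd.
  apply spec_bin_sub. apply spec_bin_mul. apply spec_cst. apply spec_snd.
  apply spec_bin_add. apply spec_bin_mul. apply spec_cst. apply spec_sum. apply spec_b.
  apply spec_bin_mul. apply spec_cst. apply spec_snd. intro; reflexivity. Qed.

Definition Assert_c (K M j : nat) := CMu (CComp (D_c K M j) CFst).
Lemma assert_halts G K M j a : (exists y, eval G (Assert_c K M j) a y) <-> Df K M j a = 0.
Proof. unfold Assert_c. split.
  - intros [y H]. apply (spec_mu _ _ (spec_comp _ _ _ _ (spec_D K M j) spec_fst)) in H.
    destruct H as [H _]. rewrite fst_pair in H. exact H.
  - intro H. exists 0. apply (spec_mu _ _ (spec_comp _ _ _ _ (spec_D K M j) spec_fst)).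
    rewrite fst_pair. split; [auto|intros; lia]. Qed.

Definition halts (e : code) (x : nat) := exists y, eval0 e x y.
Definition Cond (e : code) := CPrec CZero (CComp e CFst).
Lemma cond_halts e n b : b <= 1 -> ((exists w, eval0 (Cond e) (pair n b) w) <-> (b = 0 \/ halts e n)).
Proof. intro hb. split.
  - intros [w H]. destruct b as [|[|b]]; [auto| |lia]. right.
    destruct (prec_inv _ _ _ _ _ H) as [[a' [E H1]]|[a' [n' [z [E [H1 H2]]]]]];
      apply pair_inj in E; destruct E as [E1 E2]; [discriminate|].
    subst. destruct (comp_inv _ _ _ _ _ H2) as [y [Hy1 Hy2]]. apply spec_fst in Hy1.
    rewrite fst_pair in Hy1. subst. exists w. exact Hy2.
  - intros [->|[y Hy]].
    + exists 0. constructor. constructor.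
    + destruct b as [|[|b]]; [exists 0; constructor; constructor| |lia].
      exists y. econstructor. constructor. constructor.
      econstructor. apply spec_fst. reflexivity. rewrite fst_pair. exact Hy. Qed.

Lemma loop_spec (g : code) (Q : nat -> nat -> Prop) :
  (forall a n z y, eval0 g (pair a (pair n z)) y <-> (Q a n /\ y = 0)) ->
  forall a n y, eval0 (CPrec CZero g) (pair a n) y <-> ((forall m, m < n -> Q a m) /\ y = 0).
Proof. intros hg a n. induction n as [|n IH]; intro y; split; intro H.
  - destruct (prec_inv _ _ _ _ _ H) as [[a' [E H1]]|[a' [n' [z [E _]]]]];
      apply pair_inj in E; destruct E; subst; [|discriminate].
    apply spec_zero in H1. split; [intros; lia|auto].
  - destruct H as [_ ->]. constructor. constructor.
  - destruct (prec_inv _ _ _ _ _ H) as [[a' [E H1]]|[a' [n' [z [E [H1 H2]]]]]];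
      apply pair_inj in E; destruct E as [E1 E2]; [discriminate|].
    injection E2 as <-. subst a'. apply IH in H1. destruct H1 as [H1 ->].
    apply hg in H2. destruct H2 as [H2 ->]. split; auto.
    intros m Hm. destruct (Nat.eq_dec m n); [subst; auto|apply H1; lia].
  - destruct H as [H ->]. econstructor. apply IH. split; [intros; apply H; lia|reflexivity].
    apply hg. split; auto. Qed.

Definition gchk (K : nat) (e : code) := CComp CZero (CComp (Cond e)
   (CPair (CComp CFst CSnd) (CComp (b_c K) (CPair CFst (CComp CFst CSnd))))).
Lemma Bf_le1 K y : Bf K y <= 1.
Proof. unfold Bf, nsgf, sgf. destruct (_ =? 0), (_ =? 0); simpl; lia. Qed.
Lemma gchk_spec K e a n z y : eval0 (gchk K e) (pair a (pair n z)) y <->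
  ((Bf K (pair a n) = 0 \/ halts e n) /\ y = 0).
Proof. unfold gchk. split.
  - intro H. destruct (comp_inv _ _ _ _ _ H) as [w [H1 H2]]. apply spec_zero in H2.
    destruct (comp_inv _ _ _ _ _ H1) as [u [H3 H4]].
    apply (spec_pair _ _ _ _ (spec_comp _ _ _ _ spec_fst spec_snd)
       (spec_comp _ _ _ _ (spec_b K) (spec_pair _ _ _ _ spec_fst (spec_comp _ _ _ _ spec_fst spec_snd)))) in H3.
    rewrite !snd_pair, !fst_pair in H3. subst u. split; auto.
    apply (cond_halts e n _ (Bf_le1 K _)). eauto.
  - intros [H ->]. apply (cond_halts e n _ (Bf_le1 K (pair a n))) in H. destruct H as [w Hw].
    econstructor; [|constructor]. econstructor; [|exact Hw].
    apply (spec_pair _ _ _ _ (spec_comp _ _ _ _ spec_fst spec_snd)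
       (spec_comp _ _ _ _ (spec_b K) (spec_pair _ _ _ _ spec_fst (spec_comp _ _ _ _ spec_fst spec_snd)))).
    rewrite !snd_pair, !fst_pair. reflexivity. Qed.

Definition Acheck (K : nat) (e : code) := CComp (CPrec CZero (gchk K e)) (CPair CId CSnd).
Lemma acheck_halts K e a : (exists y, eval0 (Acheck K e) a y) <->
   (forall m, m < snd_n a -> Bf K (pair a m) = 0 \/ halts e m).
Proof. assert (L := loop_spec (gchk K e) (fun a n => Bf K (pair a n) = 0 \/ halts e n)
    (fun a n z y => gchk_spec K e a n z y)).
  unfold Acheck. split.
  - intros [y H]. destruct (comp_inv _ _ _ _ _ H) as [u [H1 H2]].
    apply (spec_pair _ _ _ _ spec_id spec_snd) in H1. subst u. apply L in H2. apply H2.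
  - intro H. exists 0. econstructor. apply (spec_pair _ _ _ _ spec_id spec_snd). reflexivity.
    apply L. auto. Qed.

Definition W_c (K M j : nat) (e : code) :=
  CComp (CPair (Assert_c K M j) (Acheck K e)) (CPair CId len_c).
Lemma W_halts K M j e s : (exists y, eval0 (W_c K M j e) (enc_nats s) y) <->
  (Df K M j (pair (enc_nats s) (length s)) = 0 /\
   forall m, m < length s -> Bf K (pair (pair (enc_nats s) (length s)) m) = 0 \/ halts e m).
Proof. unfold W_c. split.
  - intros [y H]. destruct (comp_inv _ _ _ _ _ H) as [u [H1 H2]].
    destruct (pair_inv _ _ _ _ _ H1) as [u1 [u2 [Hu1 [Hu2 ->]]]]. apply spec_id in Hu1.
    apply len_spec in Hu2. subst.
    destruct (pair_inv _ _ _ _ _ H2) as [w1 [w2 [Hw1 [Hw2 _]]]].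
    split. apply (assert_halts (fun _ => 0)). eauto.
    pose proof (proj1 (acheck_halts K e _) (ex_intro _ _ Hw2)) as HH. rewrite snd_pair in HH. exact HH.
  - intros [H1 H2]. apply (assert_halts (fun _ => 0)) in H1. destruct H1 as [y1 Hy1].
    assert (H3 : exists y, eval0 (Acheck K e) (pair (enc_nats s) (length s)) y).
    { apply acheck_halts. rewrite snd_pair. auto. }
    destruct H3 as [y2 Hy2]. eexists. econstructor.
    econstructor. apply spec_id; reflexivity. apply len_spec; reflexivity.
    econstructor; eauto. Qed.


Fixpoint cnt (f : nat -> bool) (N : nat) : nat :=
  match N with 0 => 0 | S n => cnt f n + (if f n then 1 else 0) end.

Lemma cnt_ext f g N : (forall i, i < N -> f i = g i) -> cnt f N = cnt g N.
Proof. induction N; simpl; intros H; auto. rewrite IHN, H; auto. Qed.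
Lemma cnt_mono f g N : (forall i, i < N -> f i = true -> g i = true) -> cnt f N <= cnt g N.
Proof. induction N; simpl; intros H; auto.
  assert (cnt f N <= cnt g N) by (apply IHN; auto).
  specialize (H N (Nat.lt_succ_diag_r N)). destruct (f N), (g N); try lia. Qed.
Lemma cnt_or f g h N : (forall i, i < N -> f i = true -> g i = true \/ h i = true) ->
  cnt f N <= cnt g N + cnt h N.
Proof. induction N; simpl; intros H; auto.
  assert (cnt f N <= cnt g N + cnt h N) by (apply IHN; auto).
  specialize (H N (Nat.lt_succ_diag_r N)). destruct (f N), (g N), (h N); try lia.
  all: destruct (H eq_refl); discriminate. Qed.
Lemma cnt_split f g N : cnt f N = cnt (fun i => f i && g i) N + cnt (fun i => f i && negb (g i)) N.
Proof. induction N; simpl; auto. rewrite IHN. destruct (f N), (g N); simpl; lia. Qed.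
Lemma cnt_le f N : cnt f N <= N.
Proof. induction N; simpl; auto. destruct (f N); lia. Qed.
Lemma cnt_bound f N c : (forall i, f i = true -> i < c) -> cnt f N <= c.
Proof. intro H. assert (cnt f N <= Nat.min N c); [|lia].
  induction N; cbn [cnt]; [lia|]. specialize (H N). destruct (f N).
  - specialize (H eq_refl). pose proof (cnt_le f N). lia.
  - lia. Qed.
Lemma cnt_monoN f N N' : N <= N' -> cnt f N <= cnt f N'.
Proof. induction 1; simpl; auto. lia. Qed.
Lemma filter_seq_cnt f N : length (filter f (seq 0 N)) = cnt f N.
Proof. induction N; [reflexivity|]. rewrite seq_S, filter_app, length_app, IHN. cbn [cnt filter length].
  simpl. destruct (f N); simpl; lia. Qed.

Lemma sumB_cnt (B : nat -> nat) a (f : nat -> bool) N : (forall m, B (pair a m) = if f m then 1 else 0) -> sumB B a N = cnt f N.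
Proof. intro H. induction N; cbn [sumB cnt]; [reflexivity|]. rewrite IHN, H. reflexivity. Qed.

Definition regcnt (K : nat) (s : list nat) :=
  cnt (fun i => (length s <=? K * i) && negb (nth i s 0 =? 0)) (length s).

Definition Wsem (K M j : nat) (e : code) (s : list nat) : Prop :=
  M <= length s /\ j * length s <= K * regcnt K s + 2 * length s /\
  forall i, i < length s -> length s <= K * i -> nth i s 0 <> 0 -> halts e i.

Lemma W_iff K M j e s : (exists y, eval0 (W_c K M j e) (enc_nats s) y) <-> Wsem K M j e s.
Proof. rewrite W_halts.
  assert (HB : forall m, Bf K (pair (pair (enc_nats s) (length s)) m) =
     if (length s <=? K * m) && negb (nth m s 0 =? 0) then 1 else 0).
  { intro m. unfold Bf. rewrite !fst_pair, !snd_pair, nthv_enc. unfold nsgf, sgf.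
    destruct (Nat.leb_spec (length s) (K * m)).
    - replace (length s - K * m =? 0) with true by (symmetry; apply Nat.eqb_eq; lia).
      destruct (nth m s 0 =? 0); reflexivity.
    - replace (length s - K * m =? 0) with false by (symmetry; apply Nat.eqb_neq; lia). reflexivity. }
  unfold Df. rewrite !snd_pair. rewrite (sumB_cnt _ _ _ _ HB). unfold Wsem, regcnt.
  split.
  - intros [H1 H2]. split; [lia|]. split; [lia|].
    intros i Hi Hk Hn. destruct (H2 i Hi) as [H|H]; auto. rewrite HB in H.
    apply Nat.leb_le in Hk. rewrite Hk in H. apply Nat.eqb_neq in Hn. rewrite Hn in H. discriminate.
  - intros [H1 [H2 H3]]. split; [lia|]. intros m Hm. rewrite HB.
    destruct (Nat.leb_spec (length s) (K * m)); [|auto].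
    destruct (nth m s 0 =? 0) eqn:E; [auto|]. right. apply H3; auto. apply Nat.eqb_neq; auto. Qed.

Lemma flat_dbl a n : flat_map (fun x => [2 * x + 1; 2 * x + 2]) (seq a n) = seq (2 * a + 1) (2 * n).
Proof. revert a; induction n; intro a; simpl; auto. rewrite IHn.
  replace (n + S (n + 0)) with (S (2 * n)) by lia. simpl. do 3 f_equal; lia. Qed.
Lemma map_enc_len k : map enc_bits (strings_of_len k) = seq (2 ^ k - 1) (2 ^ k).
Proof. induction k; simpl; auto.
  assert (H : map enc_bits (flat_map (fun s => [false :: s; true :: s]) (strings_of_len k)) =
     flat_map (fun x => [2 * x + 1; 2 * x + 2]) (map enc_bits (strings_of_len k))).
  { generalize (strings_of_len k). induction l; simpl; auto. rewrite IHl. reflexivity. }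
  rewrite H, IHk, flat_dbl. pose proof (Nat.pow_nonzero 2 k). f_equal; lia. Qed.
Lemma map_enc_upto n : map enc_bits (strings_upto n) = seq 0 (2 ^ S n - 1).
Proof. unfold strings_upto. induction n.
  - reflexivity.
  - rewrite seq_S, flat_map_app, map_app, IHn.
    change (flat_map strings_of_len [0 + S n]) with (strings_of_len (S n) ++ []).
    rewrite app_nil_r, map_enc_len, <- seq_app. f_equal.
    pose proof (Nat.pow_nonzero 2 n). simpl. lia. Qed.
Lemma filter_map_len {X} (f : X -> bool) (g : nat -> bool) (h : X -> nat) l : (forall x, f x = g (h x)) ->
  length (filter f l) = length (filter g (map h l)).
Proof. intro H; induction l; simpl; auto. rewrite H. destruct (g (h a)); simpl; auto. Qed.


Definition Ab (e : code) (x : nat) : bool :=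
  if excluded_middle_informative (halts e x) then true else false.
Lemma Ab_true e x : Ab e x = true <-> halts e x.
Proof. unfold Ab. destruct (excluded_middle_informative (halts e x)); split; intro; auto; discriminate. Qed.

Definition dis (G : nat -> nat) (e : code) (i : nat) : bool :=
  negb (Bool.eqb (negb (G i =? 0)) (Ab e i)).

Lemma find_j (P : nat -> Prop) k : P 0 -> ~ P k -> exists j, P j /\ ~ P (S j).
Proof. induction k; intros H0 Hk. contradiction.
  destruct (classic (P k)) as [h|h]; eauto. Qed.

Lemma nth_prefix G n i : i < n -> nth i (prefix G n) 0 = G i.
Proof. intro H. unfold prefix. rewrite (nth_indep _ 0 (G 0)) by (rewrite length_map, length_seq; auto).
  rewrite map_nth, seq_nth; auto. Qed.
Lemma length_prefix G n : length (prefix G n) = n.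
Proof. unfold prefix. now rewrite length_map, length_seq. Qed.

Lemma nth_map_seq (f : nat -> nat) a len k : k < len -> nth k (map f (seq a len)) 0 = f (a + k).
Proof. revert a k; induction len; intros a k H; [lia|]. simpl. destruct k.
  - f_equal; lia.
  - rewrite IHlen by lia. f_equal; lia. Qed.

Lemma cnt_notreg K N : 1 <= K -> K * cnt (fun i => negb (N <=? K * i)) N <= N + K.
Proof. intro hK. assert (H : cnt (fun i => negb (N <=? K * i)) N <= N / K + 1).
  { apply cnt_bound. intros i Hi. apply negb_true_iff, Nat.leb_gt in Hi.
    assert (i <= N / K) by (apply Nat.div_le_lower_bound; lia). lia. }
  pose proof (Nat.Div0.mul_div_le N K). nia. Qed.

Lemma key (e : code) (G : nat -> nat) : one_generic G -> forall K, 1 <= K -> forall M0,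
  exists N, M0 <= N /\ K * cnt (dis G e) N <= 4 * N + K.
Proof.
  intros HG K hK M0.
  set (P := fun j => forall M, exists N, M <= N /\ j * N <= K * cnt (Ab e) N).
  assert (P0 : P 0). { intro M. exists M. lia. }
  assert (PK : ~ P (S K)).
  { intro H. destruct (H 1) as [N [h1 h2]]. pose proof (cnt_le (Ab e) N). nia. }
  destruct (find_j P _ P0 PK) as [j [Pj nPj]].
  assert (HM1 : exists M1, forall N, M1 <= N -> K * cnt (Ab e) N < S j * N).
  { apply not_all_ex_not in nPj. destruct nPj as [M1 HM1]. exists M1. intros N HN.
    apply Nat.nle_gt. intro C. apply HM1. eauto. }
  destruct HM1 as [M1 HM1].
  set (M := M0 + M1 + K + 1).
  set (W := fun s => exists y, eval0 (W_c K M j e) (enc_nats s) y).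
  assert (HW : enumerable_nats W) by (exists (W_c K M j e); intro; reflexivity).
  destruct (HG W HW) as [[n Hn]|[n Hn]].
  - apply W_iff in Hn. unfold Wsem, regcnt in Hn. rewrite length_prefix in Hn.
    destruct Hn as [H1 [H2 H3]]. exists n. split; [lia|].
    set (r := fun i => n <=? K * i).
    assert (Ereg : cnt (fun i => (n <=? K * i) && negb (nth i (prefix G n) 0 =? 0)) n =
                   cnt (fun i => (r i && Ab e i) && negb (G i =? 0)) n).
    { apply cnt_ext. intros i Hi. rewrite nth_prefix by auto. unfold r.
      destruct (Nat.leb_spec n (K * i)); simpl; auto.
      destruct (G i =? 0) eqn:E; simpl; [rewrite andb_false_r; auto|].
      assert (Ab e i = true). { apply Ab_true. apply (H3 i); auto. rewrite nth_prefix by auto.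
        apply Nat.eqb_neq; auto. }
      rewrite H0. reflexivity. }
    rewrite Ereg in H2.
    assert (Ha : cnt (dis G e) n <= cnt (fun i => negb (r i)) n + cnt (fun i => (r i && Ab e i) && (G i =? 0)) n).
    { apply cnt_or. intros i Hi Hd. unfold dis, r in *.
      destruct (Nat.leb_spec n (K * i)); simpl; [|auto]. right.
      destruct (G i =? 0) eqn:E; simpl in *.
      - destruct (Ab e i); auto.
      - assert (Ab e i = true). { apply Ab_true. apply (H3 i); auto. rewrite nth_prefix by auto.
          apply Nat.eqb_neq; auto. }
        rewrite H0 in Hd. discriminate. }
    pose proof (cnt_split (fun i => r i && Ab e i) (fun i => G i =? 0) n) as Hs.
    assert (Hf : cnt (fun i => r i && Ab e i) n <= cnt (Ab e) n).
    { apply cnt_mono. intros i _ h. apply andb_true_iff in h. tauto. }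
    pose proof (cnt_notreg K n hK) as Hb.
    pose proof (HM1 n ltac:(lia)) as Hg.
    set (a := cnt (dis G e) n) in *.
    set (b := cnt (fun i => negb (r i)) n) in *.
    set (c := cnt (fun i => (r i && Ab e i) && (G i =? 0)) n) in *.
    set (d := cnt (fun i => (r i && Ab e i) && negb (G i =? 0)) n) in *.
    set (f := cnt (fun i => r i && Ab e i) n) in *.
    set (g := cnt (Ab e) n) in *.
    change (K * b <= n + K) in Hb.
    assert (K * a <= K * b + K * c) by (rewrite <- Nat.mul_add_distr_l; apply Nat.mul_le_mono_l; auto).
    assert (K * f = K * c + K * d) by (rewrite Hs; ring).
    assert (K * f <= K * g) by (apply Nat.mul_le_mono_l; auto).
    simpl in Hg. lia.
  - exfalso. set (p := prefix G n) in *.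
    destruct (Pj (M + K * n)) as [N [HN1 HN2]].
    set (t := map (fun i => if Ab e i then 1 else 0) (seq n (N - n))).
    apply (Hn t). apply W_iff.
    assert (Hlen : length (p ++ t) = N).
    { unfold p, t. rewrite length_app, length_prefix, length_map, length_seq. nia. }
    assert (Hnth : forall i, n <= i -> i < N -> nth i (p ++ t) 0 = if Ab e i then 1 else 0).
    { intros i h1 h2. unfold p. rewrite app_nth2 by (rewrite length_prefix; auto).
      rewrite length_prefix. unfold t.
      rewrite nth_map_seq by lia. replace (n + (i - n)) with i by lia. reflexivity. }
    assert (Hreg : forall i, N <= K * i -> n <= i).
    { intros i h. apply (Nat.mul_le_mono_pos_l _ _ K); lia. }
    unfold Wsem, regcnt. rewrite Hlen. split; [lia|]. split.
    + assert (E : cnt (fun i => (N <=? K * i) && negb (nth i (p ++ t) 0 =? 0)) N =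
                  cnt (fun i => (N <=? K * i) && Ab e i) N).
      { apply cnt_ext. intros i Hi. destruct (Nat.leb_spec N (K * i)); simpl; auto.
        rewrite Hnth by (auto; apply Hreg; auto). destruct (Ab e i); reflexivity. }
      rewrite E.
      assert (Ho : cnt (Ab e) N <= cnt (fun i => (N <=? K * i) && Ab e i) N + cnt (fun i => negb (N <=? K * i)) N).
      { apply cnt_or. intros i _ h. rewrite h. destruct (N <=? K * i); simpl; auto. }
      pose proof (cnt_notreg K N hK).
      set (x := cnt (Ab e) N) in *.
      set (y := cnt (fun i => (N <=? K * i) && Ab e i) N) in *.
      set (z := cnt (fun i => negb (N <=? K * i)) N) in *.
      nia.
    + intros i Hi Hk Hz. rewrite Hnth in Hz by (auto; apply Hreg; auto).
      apply Ab_true. destruct (Ab e i); auto. Qed.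


Lemma div_le_div (a b c d : R) : (0 < b)%R -> (0 < d)%R -> (a * d <= c * b)%R -> (a / b <= c / d)%R.
Proof. intros hb hd H.
  replace (a / b)%R with ((a * d) * / (b * d))%R by (field; lra).
  replace (c / d)%R with ((c * b) * / (b * d))%R by (field; lra).
  apply Rmult_le_compat_r; [left; apply Rinv_0_lt_compat; nra | exact H]. Qed.

Theorem lemma5p2 :
  forall A : list bool -> bool, enumerable_bits A ->
  exists Psi : code,
    forall G : nat -> nat, one_generic G ->
      exists alpha : list bool -> bool,
        (forall s, eval G Psi (enc_bits s) (if alpha s then 1 else 0)) /\
        lower_err alpha A = Finite 0%R.
Proof.
  intros A [eA HA]. exists (CComp sg_c COracle). intros G HG.
  exists (fun s => negb (G (enc_bits s) =? 0)). split.
  - intro s. econstructor. constructor. apply spec_sg. unfold sgf.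
    destruct (G (enc_bits s) =? 0); reflexivity.
  - unfold lower_err. apply is_LimInf_seq_unique. simpl. intro eps.
    assert (HAb : forall s, A s = Ab eA (enc_bits s)).
    { intro s. apply Bool.eq_true_iff_eq. rewrite HA, Ab_true. reflexivity. }
    assert (Hlen : forall n, length (strings_upto n) = 2 ^ S n - 1).
    { intro n. rewrite <- (length_map enc_bits), map_enc_upto, length_seq. reflexivity. }
    assert (Hcnt : forall n, length (filter (fun s => negb (Bool.eqb (negb (G (enc_bits s) =? 0)) (A s))) (strings_upto n))
                   = cnt (dis G eA) (2 ^ S n - 1)).
    { intro n. rewrite (filter_map_len _ (dis G eA) enc_bits).
      rewrite map_enc_upto, filter_seq_cnt. reflexivity.
      intro s. unfold dis. rewrite HAb. reflexivity. }
    assert (Hpos : forall n, 0 < 2 ^ S n - 1).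
    { intro n. pose proof (Nat.pow_nonzero 2 n). simpl. lia. }
    split.
    + intro N0. destruct (archimed_cor1 (eps / 9)) as [K [HK1 HK2]].
      { destruct eps; simpl; lra. }
      destruct (key eA G HG K HK2 (2 ^ (N0 + K + 6))) as [Nn [HN1 HN2]].
      set (L := Nat.log2 (Nn + 1)).
      destruct (Nat.log2_spec (Nn + 1) ltac:(lia)) as [HL1 HL2]. fold L in HL1, HL2.
      assert (HL3 : N0 + K + 6 < S L).
      { apply (Nat.pow_lt_mono_r_iff 2); lia. }
      exists (L - 1). split; [lia|].
      replace (S (L - 1)) with L by lia.
      unfold err_frac. rewrite Hcnt, Hlen. replace (S (L - 1)) with L by lia.
      set (s := 2 ^ L - 1).
      assert (Hs1 : s <= Nn) by (unfold s; lia).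
      assert (Hs2 : Nn <= 2 * s) by (unfold s; simpl in HL2; lia).
      assert (Hs3 : K <= s).
      { pose proof (Nat.pow_gt_lin_r 2 K ltac:(lia)).
        pose proof (Nat.pow_le_mono_r 2 K L ltac:(lia) ltac:(lia)). unfold s. lia. }
      pose proof (cnt_monoN (dis G eA) _ _ Hs1) as Hm.
      assert (HE : K * cnt (dis G eA) s <= 9 * s).
      { assert (K * cnt (dis G eA) s <= K * cnt (dis G eA) Nn) by (apply Nat.mul_le_mono_l; auto). lia. }
      assert (Hs0 : 0 < s) by (unfold s; pose proof (Hpos (L - 1)); replace (S (L - 1)) with L in * by lia; lia).
      apply Rle_lt_trans with (9 / INR K)%R.
      * apply div_le_div. apply lt_0_INR; lia. apply lt_0_INR; lia.
        rewrite <- mult_INR. replace 9%R with (INR 9) by (simpl; lra). rewrite <- mult_INR.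
        apply le_INR. lia.
      * unfold Rdiv. lra.
    + exists 0. intros n _. unfold err_frac. rewrite Hlen.
      apply Rlt_le_trans with 0%R. destruct eps; simpl; lra.
      apply Rmult_le_pos. apply pos_INR. left. apply Rinv_0_lt_compat. apply lt_0_INR. apply Hpos.
Qed.
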